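(* Consider problem (VP) under the standing assumptions at $\bar x\in Q_0$. Let $\bar x$ be a local weak efficient solution of (VP) (in particular, a local efficient solution), and suppose that $L^2(Q;\bar x,u)\subset T^2(Q_0;\bar x,u)$ for every critical direction $u\in\mathcal{C}(\bar x)$. Then there is no pair $(u,v)\in X\times X$ such that $F_i^2(\bar x;u,v)<_{\rm lex}(0,0)$ for all $i\in I$ and $G_j^2(\bar x;u,v)\leqq_{\rm lex}(0,0)$ for all $j\in J(\bar x)$.
   Context: Standing setting: $X$ is a Banach space; $I=\{1,\dots,p\}$, $J=\{1,\dots,m\}$; $f_i,g_j\colon X\to\mathbb{R}$; (VP) minimizes $f=(f_1,\dots,f_p)$ over $Q_0:=\{x\in X: g_j(x)\leqq 0,\ j\in J\}$. $J(\bar x):=\{j\in J: g_j(\bar x)=0\}$. Standing assumptions: $f_i$ ($i\in I$), $g_j$ ($j\in J(\bar x)$) locally Lipschitz at $\bar x$; $g_j$ ($j\notin J(\bar x)$) continuous at $\bar x$. $F^{\circ}(\bar x,u):=\limsup_{x\to\bar x,\,t\downarrow0}\frac{F(x+tu)-F(x)}{t}$; $F^{\circ\circ}(\bar x,u):=\limsup_{t\downarrow0}\frac{F(\bar x+tu)-F(\bar x)-tF^{\circ}(\bar x,u)}{\frac12t^2}$. Lexicographic order on $\mathbb{R}^2$: $a\leqq_{\rm lex}b$ iff $a_1<b_1$ or ($a_1=b_1$, $a_2\leqq b_2$); $a<_{\rm lex}b$ iff $a_1<b_1$ or ($a_1=b_1$, $a_2<b_2$). $F_i^2(\bar x;u,v):=(f_i^{\circ}(\bar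 x,u),\, f_i^{\circ}(\bar x,v)+f_i^{\circ\circ}(\bar x,u))$, $G_j^2(\bar x;u,v):=(g_j^{\circ}(\bar x,u),\, g_j^{\circ}(\bar x,v)+g_j^{\circ\circ}(\bar x,u))$. $Q:=Q_0\cap\{x: f_i(x)\leqq f_i(\bar x),\ i\in I\}$; $L^2(Q;\bar x,u):=\{v: F_i^2(\bar x;u,v)\leqq_{\rm lex}(0,0)\ \forall i\in I,\ G_j^2(\bar x;u,v)\leqq_{\rm lex}(0,0)\ \forall j\in J(\bar x)\}$. $T^2(\Omega;\bar x,u):=\{v: \exists t_k\downarrow0,\ \exists v^k\to v,\ \bar x+t_ku+\frac12t_k^2v^k\in\Omega\ \forall k\}$. Critical direction: $u\in X$ with $f_i^{\circ}(\bar x,u)\leqq0$ for all $i$, $f_i^{\circ}(\bar x,u)=0$ for some $i$, and $g_j^{\circ}(\bar x,u)\leqq0$ for all $j\in J(\bar x)$; $\mathcal{C}(\bar x)$ is the set of these (note $0\in\mathcal{C}(\bar x)$). Local weak efficient solution: there is a neighborhood $U$ of $\bar x$ such that no $x\in U\cap Q_0$ has $f_i(x)<f_i(\bar x)$ for all $i\in I$; local efficient: no $x\in U\cap Q_0$ has $f(x)\leqq f(\bar x)$ componentwise with $f(x)\ne f(\bar x)$. *)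

(* Defs.v *)
From Stdlib Require Import Reals Lra ClassicalEpsilon.
Open Scope R_scope.

Record BanachSpace := {
  bs_car :> Type;
  bs_zero : bs_car;
  bs_add : bs_car -> bs_car -> bs_car;
  bs_opp : bs_car -> bs_car;
  bs_scal : R -> bs_car -> bs_car;
  bs_norm : bs_car -> R;
  bs_add_assoc : forall x y z, bs_add x (bs_add y z) = bs_add (bs_add x y) z;
  bs_add_comm : forall x y, bs_add x y = bs_add y x;
  bs_add_zero : forall x, bs_add x bs_zero = x;
  bs_add_opp : forall x, bs_add x (bs_opp x) = bs_zero;
  bs_scal_one : forall x, bs_scal 1 x = x;
  bs_scal_assoc : forall a b x, bs_scal a (bs_scal b x) = bs_scal (a * b) x;
  bs_scal_distr_l : forall a x y, bs_scal a (bs_add x y) = bs_add (bs_scal a x) (bs_scal a y);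
  bs_scal_distr_r : forall a b x, bs_scal (a + b) x = bs_add (bs_scal a x) (bs_scal b x);
  bs_norm_nonneg : forall x, 0 <= bs_norm x;
  bs_norm_eq0 : forall x, bs_norm x = 0 -> x = bs_zero;
  bs_norm_scal : forall a x, bs_norm (bs_scal a x) = Rabs a * bs_norm x;
  bs_norm_triangle : forall x y, bs_norm (bs_add x y) <= bs_norm x + bs_norm y;
  bs_complete : forall u : nat -> bs_car,
    (forall eps, 0 < eps -> exists N, forall n k, (n >= N)%nat -> (k >= N)%nat ->
        bs_norm (bs_add (u n) (bs_opp (u k))) < eps) ->
    exists l, forall eps, 0 < eps -> exists N, forall n, (n >= N)%nat ->
        bs_norm (bs_add (u n) (bs_opp l)) < eps
}.

Arguments bs_add {b0}.
Arguments bs_opp {b0}.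
Arguments bs_scal {b0}.
Arguments bs_norm {b0}.

Definition bs_sub {X : BanachSpace} (x y : X) : X := bs_add x (bs_opp y).

Inductive Rbar := Finite (r : R) | p_infty | m_infty.

Definition Rbar_lt (a b : Rbar) : Prop :=
  match a, b with
  | Finite x, Finite y => x < y
  | m_infty, m_infty => False
  | m_infty, _ => True
  | Finite _, p_infty => True
  | _, _ => False
  end.

Definition Rbar_le (a b : Rbar) : Prop := Rbar_lt a b \/ a = b.

(* addition; the convention for (+oo) + (-oo) is irrelevant here since the
   first summand (a Clarke derivative of a locally Lipschitz function) is finite *)
Definition Rbar_plus (a b : Rbar) : Rbar :=
  match a, b with
  | Finite x, Finite y => Finite (x + y)
  | Finite _, c => c
  | c, Finite _ => c
  | p_infty, p_infty => p_infty
  | m_infty, m_infty => m_infty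
  | _, _ => Finite 0
  end.

Definition Rbar_real (a : Rbar) : R :=
  match a with Finite x => x | _ => 0 end.

Definition is_limsup {D : Type} (B : R -> D -> Prop) (q : D -> R) (L : Rbar) : Prop :=
  match L with
  | Finite l =>
      (forall eps, 0 < eps -> exists d, 0 < d /\ forall z, B d z -> q z < l + eps) /\
      (forall eps d, 0 < eps -> 0 < d -> exists z, B d z /\ l - eps < q z)
  | p_infty => forall M d, 0 < d -> exists z, B d z /\ M < q z
  | m_infty => forall M, exists d, 0 < d /\ forall z, B d z -> q z < M
  end.

Definition limsup {D : Type} (B : R -> D -> Prop) (q : D -> R) : Rbar :=
  epsilon (inhabits m_infty) (is_limsup B q).

(* Clarke generalized directional derivative F°(xbar,u):
   limsup_{x -> xbar, t ↓ 0} (F(x + t u) - F(x)) / t *)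
Definition clarke {X : BanachSpace} (F : X -> R) (xbar u : X) : Rbar :=
  limsup (fun d (z : X * R) => bs_norm (bs_sub (fst z) xbar) < d /\ 0 < snd z < d)
         (fun z => (F (bs_add (fst z) (bs_scal (snd z) u)) - F (fst z)) / snd z).

(* F°°(xbar,u) := limsup_{t ↓ 0} (F(xbar + t u) - F(xbar) - t F°(xbar,u)) / (t^2/2) *)
Definition clarke2 {X : BanachSpace} (F : X -> R) (xbar u : X) : Rbar :=
  limsup (fun d (t : R) => 0 < t < d)
         (fun t => (F (bs_add xbar (bs_scal t u)) - F xbar - t * Rbar_real (clarke F xbar u))
                   / (t ^ 2 / 2)).

Definition second_pair {X : BanachSpace} (F : X -> R) (xbar u v : X) : Rbar * Rbar :=
  (clarke F xbar u, Rbar_plus (clarke F xbar v) (clarke2 F xbar u)).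

Definition lex_le (a b : Rbar * Rbar) : Prop :=
  Rbar_lt (fst a) (fst b) \/ (fst a = fst b /\ Rbar_le (snd a) (snd b)).
Definition lex_lt (a b : Rbar * Rbar) : Prop :=
  Rbar_lt (fst a) (fst b) \/ (fst a = fst b /\ Rbar_lt (snd a) (snd b)).

Definition zero2 : Rbar * Rbar := (Finite 0, Finite 0).

(* ---------- the problem (VP); indices 0-based: I = {i | i < p}, J = {j | j < m} ---------- *)
Definition locally_lipschitz_at {X : BanachSpace} (F : X -> R) (xbar : X) : Prop :=
  exists K d, 0 < d /\ forall x y : X,
    bs_norm (bs_sub x xbar) < d -> bs_norm (bs_sub y xbar) < d ->
    Rabs (F x - F y) <= K * bs_norm (bs_sub x y).

Definition continuous_at_bs {X : BanachSpace} (F : X -> R) (xbar : X) : Prop :=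
  forall eps, 0 < eps -> exists d, 0 < d /\ forall x : X,
    bs_norm (bs_sub x xbar) < d -> Rabs (F x - F xbar) < eps.

Definition Q0 {X : BanachSpace} (m : nat) (g : nat -> X -> R) (x : X) : Prop :=
  forall j, (j < m)%nat -> g j x <= 0.

Definition active {X : BanachSpace} (g : nat -> X -> R) (xbar : X) (j : nat) : Prop :=
  g j xbar = 0.

Definition Qset {X : BanachSpace} (p m : nat) (f g : nat -> X -> R) (xbar x : X) : Prop :=
  Q0 m g x /\ forall i, (i < p)%nat -> f i x <= f i xbar.

Definition local_weak_efficient {X : BanachSpace} (p m : nat) (f g : nat -> X -> R)
  (xbar : X) : Prop :=
  exists d, 0 < d /\ forall x : X, bs_norm (bs_sub x xbar) < d -> Q0 m g x ->
    ~ (forall i, (i < p)%nat -> f i x < f i xbar).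

Definition L2 {X : BanachSpace} (p m : nat) (f g : nat -> X -> R) (xbar u v : X) : Prop :=
  (forall i, (i < p)%nat -> lex_le (second_pair (f i) xbar u v) zero2) /\
  (forall j, (j < m)%nat -> active g xbar j -> lex_le (second_pair (g j) xbar u v) zero2).

Definition T2 {X : BanachSpace} (Omega : X -> Prop) (xbar u v : X) : Prop :=
  exists (t : nat -> R) (vk : nat -> X),
    (forall k, 0 < t k) /\ Un_cv t 0 /\
    (forall eps, 0 < eps -> exists N, forall k, (k >= N)%nat -> bs_norm (bs_sub (vk k) v) < eps) /\
    (forall k, Omega (bs_add (bs_add xbar (bs_scal (t k) u)) (bs_scal (/ 2 * t k ^ 2) (vk k)))).

Definition critical_dir {X : BanachSpace} (p m : nat) (f g : nat -> X -> R) (xbar u : X) : Prop :=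
  (forall i, (i < p)%nat -> Rbar_le (clarke (f i) xbar u) (Finite 0)) /\
  (exists i, (i < p)%nat /\ clarke (f i) xbar u = Finite 0) /\
  (forall j, (j < m)%nat -> active g xbar j -> Rbar_le (clarke (g j) xbar u) (Finite 0)).

(* Main.v *)
Require Import Defs.
From Stdlib Require Import Reals Lra Lia Classical ClassicalEpsilon.
Open Scope R_scope.

Lemma add0l {X : BanachSpace} (x : X) : bs_add (bs_zero X) x = x.
Proof. rewrite bs_add_comm. apply bs_add_zero. Qed.

Lemma add_cancel_l {X : BanachSpace} (a x y : X) : bs_add a x = bs_add a y -> x = y.
Proof.
  intros H. apply (f_equal (bs_add (bs_opp a))) in H.
  rewrite !bs_add_assoc in H. rewrite (bs_add_comm _ (bs_opp a) a), bs_add_opp, !add0l in H.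
  exact H.
Qed.

Lemma scal_zero_r {X : BanachSpace} (a : R) : bs_scal a (bs_zero X) = bs_zero X.
Proof.
  apply (add_cancel_l (bs_scal a (bs_zero X))).
  rewrite <- bs_scal_distr_l, !bs_add_zero. reflexivity.
Qed.

Lemma scal_zero_l {X : BanachSpace} (x : X) : bs_scal 0 x = bs_zero X.
Proof.
  apply (add_cancel_l (bs_scal 0 x)).
  rewrite <- bs_scal_distr_r, Rplus_0_r, bs_add_zero. reflexivity.
Qed.

Lemma opp_unique {X : BanachSpace} (x y : X) : bs_add x y = bs_zero X -> y = bs_opp x.
Proof. intros H. apply (add_cancel_l x). rewrite H, bs_add_opp. reflexivity. Qed.

Lemma scal_m1 {X : BanachSpace} (x : X) : bs_scal (-1) x = bs_opp x.
Proof.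
  apply opp_unique. rewrite <- (bs_scal_one _ x) at 1.
  rewrite <- bs_scal_distr_r. replace (1 + -1) with 0 by ring. apply scal_zero_l.
Qed.

Lemma norm_zero {X : BanachSpace} : bs_norm (bs_zero X) = 0.
Proof. rewrite <- (scal_zero_l (bs_zero X)), bs_norm_scal, Rabs_R0. ring. Qed.

Lemma opp_add {X : BanachSpace} (x y : X) : bs_opp (bs_add x y) = bs_add (bs_opp x) (bs_opp y).
Proof. rewrite <- !scal_m1. apply bs_scal_distr_l. Qed.

Lemma scal_opp {X : BanachSpace} (a : R) (x : X) : bs_scal a (bs_opp x) = bs_opp (bs_scal a x).
Proof. rewrite <- !scal_m1, !bs_scal_assoc, Rmult_comm. reflexivity. Qed.

Lemma sub_add_l {X : BanachSpace} (y a b : X) : bs_sub (bs_add y a) (bs_add y b) = bs_sub a b.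
Proof.
  unfold bs_sub. rewrite opp_add. rewrite (bs_add_comm _ y a).
  rewrite <- (bs_add_assoc _ a y). rewrite (bs_add_assoc _ y (bs_opp y)), bs_add_opp, add0l.
  reflexivity.
Qed.

Lemma sub_scal {X : BanachSpace} (s : R) (a b : X) : bs_sub (bs_scal s a) (bs_scal s b) = bs_scal s (bs_sub a b).
Proof. unfold bs_sub. rewrite bs_scal_distr_l, scal_opp. reflexivity. Qed.

Lemma sub_add_r0 {X : BanachSpace} (x a : X) : bs_sub (bs_add x a) x = a.
Proof.
  unfold bs_sub. rewrite (bs_add_comm _ x a), <- bs_add_assoc, bs_add_opp, bs_add_zero. reflexivity.
Qed.

Lemma sub_add_add0 {X : BanachSpace} (x a b : X) : bs_sub (bs_add (bs_add x a) b) x = bs_add a b.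
Proof.
  rewrite <- bs_add_assoc. apply sub_add_r0.
Qed.

Lemma sub_self {X : BanachSpace} (x : X) : bs_sub x x = bs_zero X.
Proof. apply bs_add_opp. Qed.

Lemma norm_bound {X : BanachSpace} (w v : X) : bs_norm w <= bs_norm (bs_sub w v) + bs_norm v.
Proof.
  assert (w = bs_add (bs_sub w v) v) as E.
  { unfold bs_sub. rewrite <- bs_add_assoc, (bs_add_comm _ (bs_opp v) v), bs_add_opp, bs_add_zero. reflexivity. }
  rewrite E at 1. apply bs_norm_triangle.
Qed.

Lemma norm_scal_pos {X : BanachSpace} (t : R) (a : X) : 0 < t -> bs_norm (bs_scal t a) = t * bs_norm a.
Proof. intros. rewrite bs_norm_scal, Rabs_pos_eq by lra. reflexivity. Qed.

Lemma limsup_exists {D : Type} (B : R -> D -> Prop) (q : D -> R) : exists L, is_limsup B q L.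
Proof.
  set (A := fun r => exists d, 0 < d /\ forall z, B d z -> q z < r).
  destruct (classic (exists r, A r)) as [[r0 Hr0]|HA].
  - destruct (classic (exists lb, forall a, A a -> lb <= a)) as [[lb Hlb]|Hnlb].
    + set (E := fun x => A (- x)).
      assert (HEb : bound E).
      { exists (- lb). intros x Hx. unfold E in Hx. specialize (Hlb _ Hx). lra. }
      assert (HEn : exists x, E x).
      { exists (- r0). unfold E. rewrite Ropp_involutive. exact Hr0. }
      destruct (completeness E HEb HEn) as [mm [Hm1 Hm2]].
      exists (Finite (- mm)). simpl. split.
      * intros eps Heps.
        destruct (classic (exists a, A a /\ a < - mm + eps)) as [[a [Ha Hlt]]|Hno].
        -- destruct Ha as [d [Hd Hz]]. exists d. split; auto. intros z Hz'. specialize (Hz z Hz'). lra.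
        -- exfalso. assert (Hub : is_upper_bound E (mm - eps)).
           { intros x Hx. unfold E in Hx. destruct (Rle_lt_dec x (mm - eps)) as [|Hgt]; auto.
             exfalso. apply Hno. exists (-x). split; auto. lra. }
           specialize (Hm2 _ Hub). lra.
      * intros eps d Heps Hd.
        destruct (classic (exists z, B d z /\ - mm - eps < q z)) as [Hz|Hno]; auto.
        exfalso. assert (HA' : E (mm + eps / 2)).
        { unfold E. exists d. split; auto. intros z Hz. destruct (Rle_lt_dec (q z) (-mm - eps)) as [Hle|Hgt].
          - lra.
          - exfalso. apply Hno. exists z. split; auto. }
        specialize (Hm1 _ HA'). lra.
    + exists m_infty. simpl. intros M.
      destruct (classic (A M)) as [HM|HM]; [exact HM|]. exfalso. apply Hnlb. exists M.
      intros a Ha. destruct (Rle_lt_dec M a) as [|Hlt]; auto. exfalso. apply HM.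
      destruct Ha as [d [Hd Hz]]. exists d. split; auto. intros z Hz'. specialize (Hz z Hz'). lra.
  - exists p_infty. simpl. intros M d Hd.
    destruct (classic (exists z, B d z /\ M < q z)) as [H|H]; auto. exfalso. apply HA. exists (M+1). exists d. split; auto.
    intros z Hz. destruct (Rlt_le_dec M (q z)) as [Hlt|Hle]. exfalso; apply H; eauto. lra.
Qed.

Lemma limsup_spec {D : Type} (B : R -> D -> Prop) (q : D -> R) : is_limsup B q (limsup B q).
Proof. unfold limsup. apply epsilon_spec. apply limsup_exists. Qed.

Lemma is_limsup_upper {D : Type} (B : R -> D -> Prop) (q : D -> R) (r : R) (L : Rbar) :
  is_limsup B q L -> Rbar_lt L (Finite r) -> exists d, 0 < d /\ forall z, B d z -> q z < r.
Proof.
  intros H Hl. destruct L as [l| |]; simpl in *.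
  - destruct H as [H1 _]. destruct (H1 (r - l)) as [d [Hd Hz]]; [lra|].
    exists d; split; auto. intros z Hz'. specialize (Hz z Hz'). lra.
  - contradiction.
  - apply H.
Qed.

Lemma limsup_upper {D : Type} (B : R -> D -> Prop) (q : D -> R) (r : R) :
  Rbar_lt (limsup B q) (Finite r) -> exists d, 0 < d /\ forall z, B d z -> q z < r.
Proof. apply is_limsup_upper. apply limsup_spec. Qed.

Lemma is_limsup_unique {D : Type} (B : R -> D -> Prop) (q : D -> R) (L1 L2 : Rbar) :
  is_limsup B q L1 -> is_limsup B q L2 -> L1 = L2.
Proof.
  assert (FF : forall a b, is_limsup B q (Finite a) -> is_limsup B q (Finite b) -> ~ a < b).
  { intros a b [Ha _] [_ Hb] Hab. destruct (Ha ((b - a)/2)) as [d [Hd Hz]]; [lra|].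
    destruct (Hb ((b-a)/2) d) as [z [Hz1 Hz2]]; [lra|lra|]. specialize (Hz z Hz1). lra. }
  assert (FP : forall a, is_limsup B q (Finite a) -> is_limsup B q p_infty -> False).
  { intros a [Ha _] Hp. destruct (Ha 1) as [d [Hd Hz]]; [lra|].
    destruct (Hp (a+1) d Hd) as [z [Hz1 Hz2]]. specialize (Hz z Hz1). lra. }
  assert (FM : forall a, is_limsup B q (Finite a) -> is_limsup B q m_infty -> False).
  { intros a [_ Ha] Hm. destruct (Hm (a-1)) as [d [Hd Hz]].
    destruct (Ha 1 d) as [z [Hz1 Hz2]]; [lra|lra|]. specialize (Hz z Hz1). lra. }
  assert (PM : is_limsup B q p_infty -> is_limsup B q m_infty -> False).
  { intros Hp Hm. destruct (Hm 0) as [d [Hd Hz]].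
    destruct (Hp 0 d Hd) as [z [Hz1 Hz2]]. specialize (Hz z Hz1). lra. }
  intros H1 H2. destruct L1 as [a| |], L2 as [b| |]; try reflexivity.
  - destruct (Rtotal_order a b) as [h|[h|h]].
    + exfalso. exact (FF a b H1 H2 h).
    + subst; reflexivity.
    + exfalso. exact (FF b a H2 H1 h).
  - exfalso; eauto.
  - exfalso; eauto.
  - exfalso; eauto.
  - exfalso; eauto.
  - exfalso; eauto.
  - exfalso; eauto.
Qed.

Lemma limsup_zero {D : Type} (B : R -> D -> Prop) (q : D -> R) :
  (forall d z, B d z -> q z = 0) -> (forall d, 0 < d -> exists z, B d z) -> limsup B q = Finite 0.
Proof.
  intros Hq Hn. apply (is_limsup_unique B q). apply limsup_spec.
  simpl. split.
  - intros eps Heps. exists 1. split; [lra|]. intros z Hz. rewrite (Hq _ _ Hz). lra.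
  - intros eps d Heps Hd. destruct (Hn d Hd) as [z Hz]. exists z. split; auto. rewrite (Hq _ _ Hz). lra.
Qed.

Lemma clarke_zero {X : BanachSpace} (F : X -> R) (xbar : X) : clarke F xbar (bs_zero X) = Finite 0.
Proof.
  unfold clarke. apply limsup_zero.
  - intros d z _. rewrite scal_zero_r, bs_add_zero. unfold Rdiv. ring.
  - intros d Hd. exists (xbar, d/2). simpl. rewrite sub_self, norm_zero. lra.
Qed.

Lemma clarke2_zero {X : BanachSpace} (F : X -> R) (xbar : X) : clarke2 F xbar (bs_zero X) = Finite 0.
Proof.
  unfold clarke2. rewrite clarke_zero. apply limsup_zero.
  - intros d z _. rewrite scal_zero_r, bs_add_zero. simpl. unfold Rdiv. ring.
  - intros d Hd. exists (d/2). lra.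
Qed.

Lemma lt_div_mul (t d M : R) : 0 < M -> t < d / M -> t * M < d.
Proof. intros HM H. apply (Rmult_lt_compat_r M) in H; auto. unfold Rdiv in H.
  rewrite Rmult_assoc, Rinv_l, Rmult_1_r in H; lra. Qed.

Lemma div_lt_mul (x y c : R) : 0 < y -> x / y < c -> x < c * y.
Proof. intros Hy H. apply (Rmult_lt_compat_r y) in H; auto. unfold Rdiv in H.
  rewrite Rmult_assoc, Rinv_l, Rmult_1_r in H; lra. Qed.

Lemma first_order {X : BanachSpace} (F : X -> R) (xbar w : X) (tt : nat -> R) (wk : nat -> X) :
  locally_lipschitz_at F xbar ->
  Rbar_lt (clarke F xbar w) (Finite 0) ->
  (forall k, 0 < tt k) ->
  (forall eps, 0 < eps -> exists N, forall k, (k >= N)%nat -> tt k < eps) ->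
  (forall eps, 0 < eps -> exists N, forall k, (k >= N)%nat -> bs_norm (bs_sub (wk k) w) < eps) ->
  exists N, forall k, (k >= N)%nat -> F (bs_add xbar (bs_scal (tt k) (wk k))) < F xbar.
Proof.
  intros [K [dL [HdL HL]]] Hc Ht Htc Hw.
  assert (exists r, r < 0 /\ Rbar_lt (clarke F xbar w) (Finite r)) as [r [Hr Hcr]].
  { destruct (clarke F xbar w) as [l| |]; simpl in Hc.
    - exists (l/2); simpl; lra.
    - contradiction.
    - exists (-1). simpl. split; [lra|exact I]. }
  unfold clarke in Hcr. destruct (limsup_upper _ _ _ Hcr) as [d1 [Hd1 Hup]].
  set (K' := Rabs K + 1).
  assert (HK' : 0 < K') by (unfold K'; pose proof (Rabs_pos K); lra).
  set (nw := bs_norm w). assert (Hnw : 0 <= nw) by apply bs_norm_nonneg.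
  destruct (Hw (- r / (2 * K'))) as [N1 H1].
  { apply Rdiv_lt_0_compat; lra. }
  destruct (Hw 1) as [N2 H2]; [lra|].
  destruct (Htc d1 Hd1) as [N3 H3].
  destruct (Htc (dL / (nw + 2))) as [N4 H4]. { apply Rdiv_lt_0_compat; lra. }
  exists (N1 + N2 + N3 + N4)%nat. intros k Hk.
  specialize (H1 k ltac:(lia)). specialize (H2 k ltac:(lia)).
  specialize (H3 k ltac:(lia)). specialize (H4 k ltac:(lia)).
  set (t := tt k) in *. assert (Htk : 0 < t) by apply Ht.
  assert (H4' : t * (nw + 2) < dL) by (apply lt_div_mul; [lra|exact H4]).
  specialize (Hup (xbar, t)). simpl in Hup.
  rewrite sub_self, norm_zero in Hup.
  specialize (Hup ltac:(lra)).
  apply div_lt_mul in Hup; auto.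
  set (nd := bs_norm (bs_sub (wk k) w)) in *.
  assert (Hnd : 0 <= nd) by apply bs_norm_nonneg.
  pose proof (norm_bound (wk k) w) as Hb. fold nd nw in Hb.
  assert (Lip := HL (bs_add xbar (bs_scal t (wk k))) (bs_add xbar (bs_scal t w))).
  rewrite !sub_add_r0, sub_add_l, sub_scal, !norm_scal_pos in Lip by lra.
  fold nd nw in Lip.
  assert (Hx1 : t * bs_norm (wk k) < dL) by nra.
  assert (Hx2 : t * nw < dL) by nra.
  specialize (Lip Hx1 Hx2).
  assert (HK : K * (t * nd) <= K' * (t * nd)).
  { apply Rmult_le_compat_r. nra. unfold K'. pose proof (Rle_abs K). lra. }
  assert (HK2 : K' * (t * nd) <= t * (- r / 2)).
  { assert (K' * nd <= - r / 2).
    { apply Rlt_le. apply (Rmult_lt_compat_l K') in H1; auto.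
      replace (K' * (- r / (2 * K'))) with (- r / 2) in H1 by (field; lra). exact H1. }
    nra. }
  pose proof (Rle_abs (F (bs_add xbar (bs_scal t (wk k))) - F (bs_add xbar (bs_scal t w)))).
  nra.
Qed.

Lemma second_order {X : BanachSpace} (F : X -> R) (xbar u v : X) (tt : nat -> R) (vk : nat -> X) :
  locally_lipschitz_at F xbar ->
  clarke F xbar u = Finite 0 ->
  Rbar_lt (Rbar_plus (clarke F xbar v) (clarke2 F xbar u)) (Finite 0) ->
  (forall k, 0 < tt k) ->
  (forall eps, 0 < eps -> exists N, forall k, (k >= N)%nat -> tt k < eps) ->
  (forall eps, 0 < eps -> exists N, forall k, (k >= N)%nat -> bs_norm (bs_sub (vk k) v) < eps) ->
  exists N, forall k, (k >= N)%nat ->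
    F (bs_add (bs_add xbar (bs_scal (tt k) u)) (bs_scal (/ 2 * tt k ^ 2) (vk k))) < F xbar.
Proof.
  intros [K [dL [HdL HL]]] Hu0 Hc Ht Htc Hw.
  assert (exists a c, a + c < 0 /\ Rbar_lt (clarke F xbar v) (Finite a) /\
                      Rbar_lt (clarke2 F xbar u) (Finite c)) as [a [c [Hac [Ha Hcc]]]].
  { destruct (clarke F xbar v) as [x| |], (clarke2 F xbar u) as [y| |]; simpl in Hc;
      try contradiction; try lra.
    - exists (x + -(x+y)/4), (y + -(x+y)/4). simpl. lra.
    - exists (x+1), (-x-2). simpl. split; [lra|split;[lra|exact I]].
    - exists (-y-2), (y+1). simpl. split; [lra|split;[exact I|lra]].
    - exists (-1), (-1). simpl. split; [lra|split;exact I]. }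
  unfold clarke in Ha. destruct (limsup_upper _ _ _ Ha) as [d1 [Hd1 HupA]].
  unfold clarke2 in Hcc. destruct (limsup_upper _ _ _ Hcc) as [d2 [Hd2 HupC]].
  rewrite Hu0 in HupC. simpl in HupC.
  set (eta := - (a + c)). assert (Heta : 0 < eta) by (unfold eta; lra).
  set (K' := Rabs K + 1).
  assert (HK' : 0 < K') by (unfold K'; pose proof (Rabs_pos K); lra).
  set (nu := bs_norm u). assert (Hnu : 0 <= nu) by apply bs_norm_nonneg.
  set (nv := bs_norm v). assert (Hnv : 0 <= nv) by apply bs_norm_nonneg.
  set (M := nu + nv + 2). assert (HM : 0 < M) by (unfold M; lra).
  destruct (Hw (eta / (2 * K'))) as [N1 H1].
  { apply Rdiv_lt_0_compat; lra. }
  destruct (Hw 1) as [N2 H2]; [lra|].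
  destruct (Htc 1) as [N3 H3]; [lra|].
  destruct (Htc (d1 / M)) as [N4 H4]. { apply Rdiv_lt_0_compat; lra. }
  destruct (Htc (d2 / M)) as [N5 H5]. { apply Rdiv_lt_0_compat; lra. }
  destruct (Htc (dL / M)) as [N6 H6]. { apply Rdiv_lt_0_compat; lra. }
  exists (N1 + N2 + N3 + N4 + N5 + N6)%nat. intros k Hk.
  specialize (H1 k ltac:(lia)). specialize (H2 k ltac:(lia)).
  specialize (H3 k ltac:(lia)). specialize (H4 k ltac:(lia)).
  specialize (H5 k ltac:(lia)). specialize (H6 k ltac:(lia)).
  set (t := tt k) in *. assert (Htk : 0 < t) by apply Ht.
  assert (H4' : t * M < d1) by (apply lt_div_mul; [lra|exact H4]).
  assert (H5' : t * M < d2) by (apply lt_div_mul; [lra|exact H5]).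
  assert (H6' : t * M < dL) by (apply lt_div_mul; [lra|exact H6]).
  set (s := / 2 * t ^ 2).
  assert (Hs : 0 < s) by (unfold s; nra).
  assert (Hst : s < t) by (unfold s; nra).
  set (y := bs_add xbar (bs_scal t u)).
  assert (Hy : bs_norm (bs_sub y xbar) = t * nu).
  { unfold y. rewrite sub_add_r0, norm_scal_pos by lra. reflexivity. }
  assert (Hm1 : t * nu <= t * M) by (unfold M; nra).
  assert (Hm2 : t <= t * M) by (unfold M; nra).
  specialize (HupA (y, s)). simpl in HupA. rewrite Hy in HupA.
  specialize (HupA ltac:(split; lra)). apply div_lt_mul in HupA; auto.
  specialize (HupC t ltac:(split; lra)). fold y in HupC.
  idtac.
  apply div_lt_mul in HupC; [|simpl; nra].
  set (nd := bs_norm (bs_sub (vk k) v)) in *.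
  assert (Hnd : 0 <= nd) by apply bs_norm_nonneg.
  pose proof (norm_bound (vk k) v) as Hb. fold nd nv in Hb.
  assert (Lip := HL (bs_add y (bs_scal s (vk k))) (bs_add y (bs_scal s v))).
  rewrite sub_add_l, sub_scal, norm_scal_pos in Lip by lra. fold nd in Lip.
  assert (Hd1' : forall w : X, bs_norm (bs_sub (bs_add y (bs_scal s w)) xbar) <= t * nu + s * bs_norm w).
  { intros w. unfold y. rewrite sub_add_add0.
    pose proof (bs_norm_triangle _ (bs_scal t u) (bs_scal s w)) as T.
    rewrite !norm_scal_pos in T by lra. exact T. }
  pose proof (Hd1' (vk k)) as E1. pose proof (Hd1' v) as E2. fold nv in E2.
  assert (E1' : t * nu + s * bs_norm (vk k) < dL) by (unfold M in H6'; nra).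
  assert (E2' : t * nu + s * nv < dL) by (unfold M in H6'; nra).
  specialize (Lip ltac:(lra) ltac:(lra)).
  assert (HK : K * (s * nd) <= K' * (s * nd)).
  { apply Rmult_le_compat_r. nra. unfold K'. pose proof (Rle_abs K). lra. }
  assert (HK2 : K' * (s * nd) <= s * (eta / 2)).
  { assert (K' * nd <= eta / 2).
    { apply Rlt_le. apply (Rmult_lt_compat_l K') in H1; auto.
      replace (K' * (eta / (2 * K'))) with (eta / 2) in H1 by (field; lra). exact H1. }
    nra. }
  pose proof (Rle_abs (F (bs_add y (bs_scal s (vk k))) - F (bs_add y (bs_scal s v)))).
  assert (Ec : c * (t * (t * 1) / 2) = c * s) by (unfold s; field).
  assert (Eac : a * s + c * s = - (eta * s)) by (unfold eta; ring).
  assert (Ep : 0 < eta * s) by (apply Rmult_lt_0_compat; lra).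
  assert (Eh : s * (eta / 2) = eta * s / 2) by field.
  lra.
Qed.

Lemma eventually_forall (p : nat) (P : nat -> nat -> Prop) :
  (forall i, (i < p)%nat -> exists N, forall k, (k >= N)%nat -> P i k) ->
  exists N, forall k, (k >= N)%nat -> forall i, (i < p)%nat -> P i k.
Proof.
  induction p as [|p IH]; intros H.
  - exists 0%nat. intros. lia.
  - destruct IH as [N1 H1]. { intros i Hi. apply H. lia. }
    destruct (H p) as [N2 H2]; [lia|].
    exists (N1 + N2)%nat. intros k Hk i Hi.
    destruct (Nat.eq_dec i p) as [->|Hne]. apply H2; lia. apply H1; lia.
Qed.

Lemma cv_tt (t : nat -> R) : Un_cv t 0 ->
  forall eps, 0 < eps -> exists N, forall k, (k >= N)%nat -> t k < eps.
Proof.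
  intros H eps He. destruct (H eps He) as [N HN]. exists N. intros k Hk.
  specialize (HN k Hk). unfold R_dist in HN. pose proof (Rle_abs (t k - 0)). lra.
Qed.

Lemma cv_sq (t : nat -> R) : (forall k, 0 < t k) ->
  (forall eps, 0 < eps -> exists N, forall k, (k >= N)%nat -> t k < eps) ->
  forall eps, 0 < eps -> exists N, forall k, (k >= N)%nat -> / 2 * t k ^ 2 < eps.
Proof.
  intros Hp H eps He. destruct (H 1) as [N1 H1]; [lra|]. destruct (H eps He) as [N2 H2].
  exists (N1 + N2)%nat. intros k Hk. specialize (H1 k ltac:(lia)). specialize (H2 k ltac:(lia)).
  specialize (Hp k). nra.
Qed.

Lemma xk_rewrite {X : BanachSpace} (xbar u w : X) (t : R) :
  bs_add (bs_add xbar (bs_scal t u)) (bs_scal (/ 2 * t ^ 2) w) =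
  bs_add xbar (bs_scal t (bs_add u (bs_scal (t / 2) w))).
Proof.
  rewrite bs_scal_distr_l, bs_scal_assoc, bs_add_assoc.
  replace (t * (t / 2)) with (/ 2 * t ^ 2) by field. reflexivity.
Qed.

Lemma vk_bounded {X : BanachSpace} (v : X) (vk : nat -> X) :
  (forall eps, 0 < eps -> exists N, forall k, (k >= N)%nat -> bs_norm (bs_sub (vk k) v) < eps) ->
  exists N, forall k, (k >= N)%nat -> bs_norm (vk k) <= bs_norm v + 1.
Proof.
  intros H. destruct (H 1) as [N HN]; [lra|]. exists N. intros k Hk.
  pose proof (norm_bound (vk k) v). specialize (HN k Hk). lra.
Qed.

Lemma wk_cv {X : BanachSpace} (u v : X) (t : nat -> R) (vk : nat -> X) :
  (forall k, 0 < t k) ->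
  (forall eps, 0 < eps -> exists N, forall k, (k >= N)%nat -> t k < eps) ->
  (forall eps, 0 < eps -> exists N, forall k, (k >= N)%nat -> bs_norm (bs_sub (vk k) v) < eps) ->
  forall eps, 0 < eps -> exists N, forall k, (k >= N)%nat ->
    bs_norm (bs_sub (bs_add u (bs_scal (t k / 2) (vk k))) u) < eps.
Proof.
  intros Hp Ht Hv eps He. destruct (vk_bounded v vk Hv) as [N1 H1].
  pose proof (bs_norm_nonneg _ v).
  destruct (Ht (eps / (bs_norm v + 1))) as [N2 H2]. { apply Rdiv_lt_0_compat; lra. }
  exists (N1 + N2)%nat. intros k Hk. specialize (H1 k ltac:(lia)). specialize (H2 k ltac:(lia)).
  specialize (Hp k).
  rewrite sub_add_r0, norm_scal_pos by lra.
  assert (t k * (bs_norm v + 1) < eps) by (apply lt_div_mul; [lra|exact H2]).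
  pose proof (bs_norm_nonneg _ (vk k)). nra.
Qed.

Lemma xk_close {X : BanachSpace} (xbar u v : X) (t : nat -> R) (vk : nat -> X) (d0 : R) :
  0 < d0 ->
  (forall k, 0 < t k) ->
  (forall eps, 0 < eps -> exists N, forall k, (k >= N)%nat -> t k < eps) ->
  (forall eps, 0 < eps -> exists N, forall k, (k >= N)%nat -> bs_norm (bs_sub (vk k) v) < eps) ->
  exists N, forall k, (k >= N)%nat ->
    bs_norm (bs_sub (bs_add (bs_add xbar (bs_scal (t k) u)) (bs_scal (/ 2 * t k ^ 2) (vk k))) xbar) < d0.
Proof.
  intros Hd0 Hp Ht Hv. destruct (vk_bounded v vk Hv) as [N1 H1].
  pose proof (bs_norm_nonneg _ v). pose proof (bs_norm_nonneg _ u).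
  set (M := bs_norm u + bs_norm v + 2).
  destruct (Ht (d0 / M)) as [N2 H2]. { apply Rdiv_lt_0_compat; unfold M; lra. }
  destruct (Ht 1) as [N3 H3]; [lra|].
  exists (N1 + N2 + N3)%nat. intros k Hk. specialize (H1 k ltac:(lia)). specialize (H2 k ltac:(lia)).
  specialize (H3 k ltac:(lia)). specialize (Hp k).
  assert (t k * M < d0) by (apply lt_div_mul; [unfold M; lra|exact H2]).
  rewrite sub_add_add0.
  pose proof (bs_norm_triangle _ (bs_scal (t k) u) (bs_scal (/ 2 * t k ^ 2) (vk k))) as T.
  rewrite !norm_scal_pos in T by nra.
  pose proof (bs_norm_nonneg _ (vk k)).
  assert (/ 2 * t k ^ 2 <= t k) by nra.
  assert (/ 2 * t k ^ 2 * bs_norm (vk k) <= t k * bs_norm (vk k)) by (apply Rmult_le_compat_r; lra).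
  assert (t k * bs_norm (vk k) <= t k * (bs_norm v + 1)) by (apply Rmult_le_compat_l; lra).
  unfold M in *. nra.
Qed.

Lemma endgame {X : BanachSpace} (p m : nat) (f g : nat -> X -> R) (xbar : X) (x : nat -> X) (d0 : R) :
  (forall x : X, bs_norm (bs_sub x xbar) < d0 -> Q0 m g x ->
    ~ (forall i, (i < p)%nat -> f i x < f i xbar)) ->
  (forall k, Q0 m g (x k)) ->
  (exists N, forall k, (k >= N)%nat -> bs_norm (bs_sub (x k) xbar) < d0) ->
  (forall i, (i < p)%nat -> exists N, forall k, (k >= N)%nat -> f i (x k) < f i xbar) ->
  False.
Proof.
  intros Heff HQ [N1 H1] Hf.
  destruct (eventually_forall p (fun i k => f i (x k) < f i xbar) Hf) as [N2 H2].
  apply (Heff (x (N1 + N2)%nat)).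
  - apply H1; lia.
  - apply HQ.
  - apply H2; lia.
Qed.

Lemma rbar_plus0_le (c : Rbar) : Rbar_le c (Finite 0) -> Rbar_le (Rbar_plus c (Finite 0)) (Finite 0).
Proof.
  intros [H|H].
  - left. destruct c; simpl in *; auto; lra.
  - subst. right. simpl. f_equal. ring.
Qed.

Theorem theorem4p2 (X : BanachSpace) (p m : nat) (f g : nat -> X -> R) (xbar : X) :
  (1 <= p)%nat ->
  Q0 m g xbar ->
  (forall i, (i < p)%nat -> locally_lipschitz_at (f i) xbar) ->
  (forall j, (j < m)%nat -> active g xbar j -> locally_lipschitz_at (g j) xbar) ->
  (forall j, (j < m)%nat -> ~ active g xbar j -> continuous_at_bs (g j) xbar) ->
  local_weak_efficient p m f g xbar ->
  (forall u : X, critical_dir p m f g xbar u ->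
     forall v : X, L2 p m f g xbar u v -> T2 (Q0 m g) xbar u v) ->
  ~ (exists u v : X,
       (forall i, (i < p)%nat -> lex_lt (second_pair (f i) xbar u v) zero2) /\
       (forall j, (j < m)%nat -> active g xbar j -> lex_le (second_pair (g j) xbar u v) zero2)).
Proof.
  intros Hp HQ0 Hf Hg _ [d0 [Hd0 Heff]] HT [u [v [HF HG]]].
  destruct (classic (exists i, (i < p)%nat /\ clarke (f i) xbar u = Finite 0)) as [Hcrit|Hnc].
  - assert (Hcd : critical_dir p m f g xbar u).
    { split; [|split; [exact Hcrit|]].
      - intros i Hi. destruct (HF i Hi) as [H|[H _]]; simpl in H; [left|right]; exact H.
      - intros j Hj Ha. destruct (HG j Hj Ha) as [H|[H _]]; simpl in H; [left|right]; exact H. }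
    assert (HL2 : L2 p m f g xbar u v).
    { split.
      - intros i Hi. destruct (HF i Hi) as [H|[H1 H2]];
          [left; exact H| right; split; [exact H1| left; exact H2]].
      - exact HG. }
    destruct (HT u Hcd v HL2) as [t [vk [Ht [Hcv [Hvk HQ]]]]].
    pose proof (cv_tt t Hcv) as Htc.
    apply (endgame p m f g xbar _ d0 Heff HQ).
    + apply xk_close with v; auto.
    + intros i Hi. destruct (HF i Hi) as [H|[H1 H2]].
      * simpl in H. destruct (first_order (f i) xbar u t (fun k => bs_add u (bs_scal (t k / 2) (vk k)))
                    (Hf i Hi) H Ht Htc (wk_cv u v t vk Ht Htc Hvk)) as [N HN].
        exists N. intros k Hk. rewrite xk_rewrite. apply HN; exact Hk.
      * simpl in H1, H2. apply (second_order (f i) xbar u v t vk); auto.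
  - assert (Hlt : forall i, (i < p)%nat -> Rbar_lt (clarke (f i) xbar u) (Finite 0)).
    { intros i Hi. destruct (HF i Hi) as [H|[H1 H2]].
      - exact H.
      - exfalso. apply Hnc. exists i. auto. }
    assert (Hcd : critical_dir p m f g xbar (bs_zero X)).
    { split; [|split].
      - intros i Hi. right. apply clarke_zero.
      - exists 0%nat. split; [lia|apply clarke_zero].
      - intros j Hj Ha. right. apply clarke_zero. }
    assert (HL2 : L2 p m f g xbar (bs_zero X) u).
    { split.
      - intros i Hi. right. unfold second_pair. simpl. rewrite clarke_zero, clarke2_zero.
        split; [reflexivity|]. apply rbar_plus0_le. left. apply Hlt; auto.
      - intros j Hj Ha. right. unfold second_pair. simpl. rewrite clarke_zero, clarke2_zero.
        split; [reflexivity|]. apply rbar_plus0_le.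
        destruct (HG j Hj Ha) as [H|[H _]]; simpl in H; [left|right]; exact H. }
    destruct (HT _ Hcd u HL2) as [t [vk [Ht [Hcv [Hvk HQ]]]]].
    pose proof (cv_tt t Hcv) as Htc.
    apply (endgame p m f g xbar _ d0 Heff HQ).
    + apply xk_close with u; auto.
    + intros i Hi.
      assert (Hs : forall k, 0 < / 2 * t k ^ 2) by (intros k; specialize (Ht k); nra).
      destruct (first_order (f i) xbar u (fun k => / 2 * t k ^ 2) vk
                  (Hf i Hi) (Hlt i Hi) Hs (cv_sq t Ht Htc) Hvk) as [N HN].
      exists N. intros k Hk. rewrite scal_zero_r, bs_add_zero. apply HN; exact Hk.
Qed.
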